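(* Let $D$ be a digraph. (1) If for every integer $k\geq3$ there is a colouring of the vertices of $D$ with countably many colours admitting no monochromatic copy of $\vec C_k$, then $\chi(D)\leq 2^{\omega}$. (2) The arc set of $D$ can be partitioned into two sets $E_0,E_1$ such that neither $(V(D),E_0)$ nor $(V(D),E_1)$ contains a directed cycle.
   Context: A digraph is a pair $D=(V,E)$ with $E\subseteq V^2$ such that $uv\in E$ implies $vu\notin E$. $\vec C_k$ is the directed cycle on $k$ vertices. The dichromatic number $\chi(D)$ is the minimal number of acyclic vertex sets (sets inducing no directed cycle) covering $V(D)$. *)

(* Defs.v *)
From mathcomp Require Import all_boot.
Set Implicit Arguments. Unset Strict Implicit. Unset Printing Implicit Defensive.

Definition is_digraph (V : Type) (E : V -> V -> Prop) : Prop :=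
  forall u v, E u v -> ~ E v u.

Definition cycle_copy_in (V : Type) (E : V -> V -> Prop) (A : V -> Prop)
  (k : nat) : Prop :=
  exists f : nat -> V,
    (forall i j, i < k -> j < k -> f i = f j -> i = j) /\
    (forall i, i < k -> A (f i)) /\
    (forall i, i < k -> E (f i) (f (i.+1 %% k))).

(* A contains a directed cycle (length >= 2; in a digraph every cycle has
   length >= 3 anyway). *)
Definition has_dicycle (V : Type) (E : V -> V -> Prop) (A : V -> Prop) : Prop :=
  exists k, 2 <= k /\ cycle_copy_in E A k.

Definition acyclic_set (V : Type) (E : V -> V -> Prop) (A : V -> Prop) : Prop :=
  ~ has_dicycle E A.

(* chi(D) <= 2^omega: V can be covered by acyclic sets indexed by a set of
   size continuum, here nat -> bool. *)
Definition dichromatic_le_continuum (V : Type) (E : V -> V -> Prop) : Prop :=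
  exists c : V -> (nat -> bool), forall col, acyclic_set E (fun v => c v = col).

Definition no_mono_Ck (V : Type) (E : V -> V -> Prop) (c : V -> nat) (k : nat) : Prop :=
  forall col, ~ cycle_copy_in E (fun v => c v = col) k.

(* Main.v *)
Require Import Defs.
From mathcomp Require Import all_boot.
From mathcomp Require Import boolp wochoice.
From Stdlib Require Import ClassicalEpsilon.
From Stdlib Require Cantor.

Lemma part1 (V : Type) (E : V -> V -> Prop) (HD : is_digraph E) :
  (forall k : nat, 3 <= k -> exists c : V -> nat, no_mono_Ck E c k) ->
     dichromatic_le_continuum E.
Proof.
move=> H.
have H' : forall k, exists c : V -> nat, 3 <= k -> no_mono_Ck E c k.
  move=> k; case: (boolP (3 <= k)) => hk.
    by have [c hc] := H k hk; exists c.
  by exists (fun _ => 0).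
pose ck k := proj1_sig (constructive_indefinite_description _ (H' k)).
have hck : forall k, 3 <= k -> no_mono_Ck E (ck k) k.
  by move=> k; rewrite /ck; case: constructive_indefinite_description.
exists (fun v n => ck (Cantor.of_nat n).1 v == (Cantor.of_nat n).2).
move=> col [k [hk [f [finj [fcol fE]]]]].
case: (ltngtP k 2) => [|k3|k2]; first by rewrite ltnNge hk.
- apply: (hck k k3 (ck k (f 0))); exists f; split=> //; split=> // i hi.
  have e1 := fcol i hi; have e0 := fcol 0 (leq_trans (isT : 0 < 2) hk).
  have [n hn] : exists n, Cantor.of_nat n = (k, ck k (f 0)).
    by exists (Cantor.to_nat (k, ck k (f 0))); apply: Cantor.cancel_of_to.
  have := congr1 (fun g => g n) e0.
  rewrite -{}e1 /= hn /= eqxx => /esym.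
  by move/eqP.
- subst k.
  have a := fE 0 isT; have b := fE 1 isT.
  by apply: (HD _ _ a); rewrite /= modnn in b.
Qed.

Lemma part2 (V : Type) (E : V -> V -> Prop) (HD : is_digraph E) :
  (exists E0 E1 : V -> V -> Prop,
     (forall u v, E u v <-> (E0 u v \/ E1 u v)) /\
     (forall u v, ~ (E0 u v /\ E1 u v)) /\
     ~ has_dicycle E0 (fun _ => True) /\
     ~ has_dicycle E1 (fun _ => True)).
Proof.
have [R Hwo] := well_ordering_principle {classic V}.
have Rrefl : forall x : V, R x x.
  move=> x; have [z [[zA zlb] _]] := Hwo (pred1 (x : {classic V})) (ex_intro _ x (eqxx _)).
  by move: zA zlb; rewrite inE => /eqP -> ; apply; rewrite inE.
have Ranti : forall x y : V, R x y -> R y x -> x = y.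
  move=> x y rxy ryx.
  pose A := [pred z : {classic V} | (z == x) || (z == y)].
  have [z [_ zu]] := Hwo A (ex_intro _ x (introT orP (or_introl (eqxx _)))).
  rewrite -(zu x); last first.
    split; first by rewrite inE eqxx.
    by move=> w; rewrite inE => /orP[/eqP->|/eqP->].
  apply: zu; split; first by rewrite inE eqxx orbT.
  by move=> w; rewrite inE => /orP[/eqP->|/eqP->].
have Hmin : forall (f : nat -> V) k, 0 < k ->
    exists2 j, j < k & forall i, i < k -> R (f j) (f i).
  move=> f k hk.
  pose A := [pred x : {classic V} | `[< exists i, i < k /\ f i = x >]].
  have [z [[zA zlb] _]] := Hwo A (ex_intro _ (f 0) (asboolT (ex_intro _ 0 (conj hk erefl)))).
  move: zA zlb; rewrite inE => /asboolP [j [hj <-]] zlb.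
  exists j => // i hi; apply: zlb; rewrite inE; apply/asboolP; by exists i.
exists (fun u v => E u v /\ R u v), (fun u v => E u v /\ ~~ R u v).
split; first by move=> u v; case: (boolP (R u v)); intuition.
split; first by move=> u v [[_ ->] [_]].
split.
- move=> [k [hk [f [_ [_ fE]]]]].
  have k0 : 0 < k by apply: leq_trans hk.
  have [j hj jmin] := Hmin f k k0.
  have [i hi ij] : exists2 i, i < k & i.+1 %% k = j.
    case: j hj {jmin} => [|j'] hj.
      by exists k.-1; rewrite ?prednK // ?modnn // ltn_predL.
    by exists j'; [apply: ltnW | rewrite modn_small].
  have [ee r] := fE i hi; rewrite ij in ee r.
  have := Ranti _ _ r (jmin i hi) => eq; rewrite eq in ee.
  exact: (HD _ _ ee ee).
- move=> [k [hk [f [_ [_ fE]]]]].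
  have k0 : 0 < k by apply: leq_trans hk.
  have [j hj jmin] := Hmin f k k0.
  have [_ r] := fE j hj.
  by rewrite jmin // ltn_pmod in r.
Qed.

Theorem mainTheorem19 (V : Type) (E : V -> V -> Prop) (HD : is_digraph E) :
  ((forall k : nat, 3 <= k -> exists c : V -> nat, no_mono_Ck E c k) ->
     dichromatic_le_continuum E)
  /\
  (exists E0 E1 : V -> V -> Prop,
     (forall u v, E u v <-> (E0 u v \/ E1 u v)) /\
     (forall u v, ~ (E0 u v /\ E1 u v)) /\
     ~ has_dicycle E0 (fun _ => True) /\
     ~ has_dicycle E1 (fun _ => True)).
Proof. split; [exact: part1 | exact: part2]. Qed.
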